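(* There is a partition of $\mathbb{R}^3$ into $2^{\aleph_0}$ pairwise disjoint subsets, each of which is arcwise connected and dense in $\mathbb{R}^3$.
   Context: $\mathbb{R}^3$ carries its usual Euclidean topology. *)

(* Defs.v *)
From Stdlib Require Import Reals.
Open Scope R_scope.

Definition R3 : Type := (R * R * R)%type.

Definition dist3 (p q : R3) : R :=
  match p, q with
  | (x1, y1, z1), (x2, y2, z2) =>
      sqrt ((x1 - x2)^2 + (y1 - y2)^2 + (z1 - z2)^2)
  end.

Definition continuous_on_unit (f : R -> R3) : Prop :=
  forall t, 0 <= t <= 1 -> forall eps, eps > 0 ->
    exists delta, delta > 0 /\
      forall s, 0 <= s <= 1 -> Rabs (s - t) < delta -> dist3 (f s) (f t) < eps.

(* An arc in A from x to y: a continuous injective map [0,1] -> A with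
   f 0 = x, f 1 = y (continuous injective on the compact [0,1] into the
   Hausdorff R^3 is the same as a topological embedding). *)
Definition is_arc_in (A : R3 -> Prop) (x y : R3) (f : R -> R3) : Prop :=
  continuous_on_unit f /\
  (forall s t, 0 <= s <= 1 -> 0 <= t <= 1 -> f s = f t -> s = t) /\
  (forall t, 0 <= t <= 1 -> A (f t)) /\
  f 0 = x /\ f 1 = y.

Definition arcwise_connected (A : R3 -> Prop) : Prop :=
  forall x y, A x -> A y -> x <> y -> exists f, is_arc_in A x y f.

Definition dense3 (A : R3 -> Prop) : Prop :=
  forall p r, r > 0 -> exists q, A q /\ dist3 p q < r.

(* Main.v *)
Require Import Defs.
From Stdlib Require Import Reals Lra Lia ZArith ClassicalEpsilon Cantor.
Open Scope R_scope.

Lemma cplus f g : continuity f -> continuity g -> continuity (fun t => f t + g t).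
Proof. exact (continuity_plus f g). Qed.
Lemma cminus f g : continuity f -> continuity g -> continuity (fun t => f t - g t).
Proof. exact (continuity_minus f g). Qed.
Lemma cmult f g : continuity f -> continuity g -> continuity (fun t => f t * g t).
Proof. exact (continuity_mult f g). Qed.
Lemma cconst c : continuity (fun _ => c).
Proof. intros t; apply continuity_pt_const; intros a b; reflexivity. Qed.
Lemma cid : continuity (fun t => t).
Proof. intros t; apply derivable_continuous_pt; apply derivable_pt_id. Qed.
Lemma ccomp f g : continuity f -> continuity g -> continuity (fun t => f (g t)).
Proof. intros. exact (continuity_comp g f H0 H). Qed.

Definition clamp (u : R) : R := (Rabs u - Rabs (u - 1) + 1) / 2.

Lemma cclamp : continuity clamp.
Proof.
  unfold clamp. apply cmult; [| apply cconst].
  apply cplus; [| apply cconst]. apply cminus.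
  - apply Rcontinuity_abs.
  - apply (ccomp Rabs (fun t => t - 1)); [apply Rcontinuity_abs|].
    apply cminus; [apply cid | apply cconst].
Qed.

Ltac creg := repeat first [ apply cclamp | apply cid | apply cconst | apply continuity_sin
  | apply (ccomp clamp) | apply (ccomp sin)
  | apply cplus | apply cminus | apply cmult ].


Lemma pt_close f t eps : continuity_pt f t -> eps > 0 ->
  exists d, d > 0 /\ forall s, Rabs (s - t) < d -> Rabs (f s - f t) < eps.
Proof.
  intros Hc He. unfold continuity_pt, continue_in, limit1_in, limit_in in Hc.
  destruct (Hc eps He) as [d [Hd H]]. exists d. split; auto.
  intros s Hs. destruct (Req_dec s t) as [->|Hne].
  - unfold Rminus. rewrite Rplus_opp_r, Rabs_R0. lra.
  - apply H. split; [split; [exact I | auto] | exact Hs].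
Qed.

Lemma dist3_le a1 a2 a3 b1 b2 b3 :
  dist3 (a1,a2,a3) (b1,b2,b3) <= Rabs (a1-b1) + Rabs (a2-b2) + Rabs (a3-b3).
Proof.
  simpl. pose proof (Rabs_pos (a1-b1)). pose proof (Rabs_pos (a2-b2)).
  pose proof (Rabs_pos (a3-b3)).
  rewrite <- (sqrt_pow2 (Rabs (a1-b1) + Rabs (a2-b2) + Rabs (a3-b3))) by lra.
  apply sqrt_le_1_alt.
  pose proof (pow2_abs (a1-b1)). pose proof (pow2_abs (a2-b2)). pose proof (pow2_abs (a3-b3)).
  nra.
Qed.

Lemma cont3 X Y Z : continuity X -> continuity Y -> continuity Z ->
  continuous_on_unit (fun t => (X t, Y t, Z t)).
Proof.
  intros HX HY HZ t _ eps He.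
  destruct (pt_close X t (eps/3) (HX t)) as [d1 [Hd1 H1]]; [lra|].
  destruct (pt_close Y t (eps/3) (HY t)) as [d2 [Hd2 H2]]; [lra|].
  destruct (pt_close Z t (eps/3) (HZ t)) as [d3 [Hd3 H3]]; [lra|].
  exists (Rmin d1 (Rmin d2 d3)). split.
  - repeat apply Rmin_pos; auto.
  - intros s _ Hs.
    assert (Rabs (s - t) < d1) by (eapply Rlt_le_trans; [exact Hs| apply Rmin_l]).
    assert (Rabs (s - t) < d2) by (eapply Rlt_le_trans; [exact Hs| eapply Rle_trans; [apply Rmin_r|apply Rmin_l]]).
    assert (Rabs (s - t) < d3) by (eapply Rlt_le_trans; [exact Hs| eapply Rle_trans; [apply Rmin_r|apply Rmin_r]]).
    eapply Rle_lt_trans; [apply dist3_le|].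
    specialize (H1 s H). specialize (H2 s H0). specialize (H3 s H4). lra.
Qed.

Lemma clamp0 u : u <= 0 -> clamp u = 0.
Proof. intros. unfold clamp. rewrite Rabs_left1, Rabs_left1 by lra. lra. Qed.
Lemma clampid u : 0 <= u <= 1 -> clamp u = u.
Proof. intros. unfold clamp. rewrite Rabs_right, Rabs_left1 by lra. lra. Qed.
Lemma clamp1 u : 1 <= u -> clamp u = 1.
Proof. intros. unfold clamp. rewrite Rabs_right, Rabs_right by lra. lra. Qed.

Definition v (n : nat) : R :=
  let (c, _) := of_nat n in let (a, s) := of_nat c in let (p, q) := of_nat a in
  (INR p - INR q) / INR (S s).

Lemma Z_to_nat_neg x : (x <= 0)%Z -> Z.to_nat x = 0%nat.
Proof. destruct x; simpl; auto; lia. Qed.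

Lemma IZR_nat z : IZR z = INR (Z.to_nat z) - INR (Z.to_nat (- z)).
Proof.
  destruct (Z_le_gt_dec 0 z).
  - rewrite (Z_to_nat_neg (-z)) by lia. rewrite INR_IZR_INZ, Z2Nat.id by lia. simpl. lra.
  - rewrite (Z_to_nat_neg z) by lia. rewrite (INR_IZR_INZ (Z.to_nat (-z))), Z2Nat.id by lia.
    rewrite opp_IZR. simpl. lra.
Qed.

Lemma nat_big M : exists s : nat, M < INR s.
Proof.
  destruct (archimed (Rabs M)) as [H1 H2].
  assert (0 <= IZR (up (Rabs M))) by (pose proof (Rabs_pos M); lra).
  apply le_IZR in H.
  exists (Z.to_nat (up (Rabs M))). rewrite INR_IZR_INZ, Z2Nat.id by lia.
  pose proof (Rle_abs M). lra.
Qed.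

Lemma v_dense w eps N : eps > 0 -> exists n, (N <= n)%nat /\ Rabs (v n - w) < eps.
Proof.
  intros He.
  destruct (nat_big (1/eps)) as [s Hs].
  set (S' := INR (S s)).
  assert (HS : 1/eps < S') by (unfold S'; rewrite S_INR; lra).
  assert (HS0 : 0 < S') by (assert (0 < 1/eps) by (unfold Rdiv; apply Rmult_lt_0_compat; [lra| apply Rinv_0_lt_compat; lra]); lra).
  destruct (archimed (w * S')) as [A1 A2].
  set (z := up (w * S')) in *.
  exists (to_nat (to_nat (to_nat (Z.to_nat z, Z.to_nat (- z)), s), N)).
  split.
  - pose proof (to_nat_non_decreasing (to_nat (to_nat (Z.to_nat z, Z.to_nat (- z)), s)) N). lia.
  - unfold v. rewrite !cancel_of_to. fold S'. rewrite <- IZR_nat.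
    assert (Hinv : 1 / S' < eps).
    { assert (1 < eps * S').
      { apply Rmult_lt_compat_l with (r := eps) in HS; [|lra].
        replace (eps * (1/eps)) with 1 in HS by (field; lra). lra. }
      apply (Rmult_lt_reg_r S'); auto. replace (1/S' * S') with 1 by (field; lra). lra. }
    assert (E : IZR z / S' - w = (IZR z - w * S') / S') by (field; lra).
    rewrite E. rewrite Rabs_right.
    + apply Rle_lt_trans with (1 / S'); auto.
      unfold Rdiv. apply Rmult_le_compat_r; [left; apply Rinv_0_lt_compat; lra| lra].
    + apply Rle_ge. unfold Rdiv. apply Rmult_le_pos; [lra| left; apply Rinv_0_lt_compat; lra].
Qed.

Definition odd_exp (y : R) (n : nat) : Prop := exists j : Z, y * 2 ^ n = IZR (2 * j + 1).

Lemma odd_exp_lt y n m : odd_exp y n -> odd_exp y m -> (n < m)%nat -> False.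
Proof.
  intros [j Hj] [k Hk] Hlt.
  replace m with (n + S (m - n - 1))%nat in Hk by lia.
  rewrite pow_add, <- Rmult_assoc, Hj in Hk.
  replace 2 with (IZR 2) in Hk by reflexivity.
  rewrite pow_IZR, <- mult_IZR in Hk. apply eq_IZR in Hk.
  rewrite Nat2Z.inj_succ, Z.pow_succ_r in Hk by lia.
  set (X := (2 ^ Z.of_nat (m - n - 1))%Z) in Hk. lia.
Qed.

Lemma odd_exp_uniq y n m : odd_exp y n -> odd_exp y m -> n = m.
Proof.
  intros H1 H2. destruct (Nat.lt_trichotomy n m) as [H|[H|H]].
  - exfalso; exact (odd_exp_lt y n m H1 H2 H).
  - exact H.
  - exfalso; exact (odd_exp_lt y m n H2 H1 H).
Qed.

Definition Nexp (y : R) : nat := epsilon (inhabits 0%nat) (fun n => odd_exp y n).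
Definition h (y : R) : R := v (Nexp y).

Lemma h_odd y n : odd_exp y n -> h y = v n.
Proof.
  intros H. unfold h. f_equal. apply (odd_exp_uniq y); auto.
  apply (epsilon_spec (inhabits 0%nat) (fun n => odd_exp y n)). eauto.
Qed.

Lemma h_dense b d w eps : d > 0 -> eps > 0 ->
  exists y, Rabs (y - b) < d /\ Rabs (h y - w) < eps.
Proof.
  intros Hd He.
  destruct (Pow_x_infinity 2 ltac:(rewrite Rabs_right; lra) (4 / d)) as [N HN].
  destruct (v_dense w eps N He) as [n [Hn Hv]].
  specialize (HN n Hn). rewrite Rabs_right in HN by (apply Rle_ge, pow_le; lra).
  assert (Hp : 0 < 2 ^ n) by (apply pow_lt; lra).
  destruct (archimed (b * 2 ^ n / 2)) as [A1 A2].
  set (j := up (b * 2 ^ n / 2)) in *.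
  exists (IZR (2 * j + 1) / 2 ^ n). split.
  - rewrite plus_IZR, mult_IZR.
    assert (E : (IZR 2 * IZR j + IZR 1) / 2 ^ n - b = (2 * IZR j + 1 - b * 2 ^ n) / 2 ^ n)
      by (simpl; field; lra).
    rewrite E, Rabs_right.
    + apply (Rmult_lt_reg_r (2 ^ n)); auto.
      replace ((2 * IZR j + 1 - b * 2 ^ n) / 2 ^ n * 2 ^ n) with (2 * IZR j + 1 - b * 2 ^ n) by (field; lra).
      assert (4 / d * d <= 2 ^ n * d) by (apply Rmult_le_compat_r; lra).
      replace (4 / d * d) with 4 in H by (field; lra).
      assert (2 * IZR j <= b * 2^n + 2) by lra. lra.
    + apply Rle_ge. unfold Rdiv. apply Rmult_le_pos; [|left; apply Rinv_0_lt_compat; auto].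
      assert (b * 2 ^ n < 2 * IZR j) by lra. lra.
  - rewrite (h_odd _ n); auto. exists j. field. lra.
Qed.

Lemma regions t : 0 <= t <= 1 ->
  (t <= 1/3 /\ clamp (3*t) = 3*t /\ clamp (3*t-1) = 0 /\ clamp (3*t-2) = 0) \/
  (1/3 <= t <= 2/3 /\ clamp (3*t) = 1 /\ clamp (3*t-1) = 3*t-1 /\ clamp (3*t-2) = 0) \/
  (2/3 <= t /\ clamp (3*t) = 1 /\ clamp (3*t-1) = 1 /\ clamp (3*t-2) = 3*t-2).
Proof.
  intros Ht. destruct (Rle_dec t (1/3)).
  - left. rewrite clampid, clamp0, clamp0 by lra. lra.
  - destruct (Rle_dec t (2/3)).
    + right; left. rewrite clamp1, clampid, clamp0 by lra. lra.
    + right; right. rewrite clamp1, clamp1, clampid by lra. lra.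
Qed.

Lemma sinPI_int k : sin (IZR k * PI) = 0.
Proof. apply sin_eq_0_1. eauto. Qed.

Lemma sin_nonzero_near a d : d > 0 -> exists x, Rabs (x - a) < d /\ sin (x * PI) <> 0.
Proof.
  intros Hd. destruct (Req_dec (sin (a * PI)) 0) as [H0|H0].
  - set (e := Rmin (d/2) (1/2)).
    assert (He1 : 0 < e) by (apply Rmin_pos; lra).
    assert (He2 : e <= d/2) by apply Rmin_l.
    assert (He3 : e <= 1/2) by apply Rmin_r.
    exists (a + e). split.
    + replace (a + e - a) with e by ring. rewrite Rabs_right; lra.
    + intros H1. apply sin_eq_0_0 in H0. apply sin_eq_0_0 in H1.
      destruct H0 as [k Hk]. destruct H1 as [k' Hk'].
      pose proof PI_RGT_0.
      apply Rmult_eq_reg_r in Hk; [|lra]. apply Rmult_eq_reg_r in Hk'; [|lra].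
      assert (IZR (k' - k) = e) by (rewrite minus_IZR; lra).
      assert (Ha : 0 < IZR (k' - k)) by lra. assert (Hb : IZR (k' - k) < 1) by lra.
      apply lt_IZR in Ha. apply lt_IZR in Hb. lia.
  - exists a. split; auto. unfold Rminus. rewrite Rplus_opp_r, Rabs_R0. lra.
Qed.

Definition P (i : R) (p : R3) : Prop :=
  match p with (x, y, z) => z = i + sin (x * PI) * h y end.

Lemma P_dense i : dense3 (P i).
Proof.
  intros [[a b] c] r Hr.
  destruct (sin_nonzero_near a (r/3)) as [x [Hx Hs]]; [lra|].
  set (s := sin (x * PI)) in *.
  assert (Has : 0 < Rabs s) by (apply Rabs_pos_lt; auto).
  destruct (h_dense b (r/3) ((c - i) / s) (r/3 / Rabs s)) as [y [Hy Hh]]; [lra| |].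
  { unfold Rdiv. apply Rmult_lt_0_compat; [lra| apply Rinv_0_lt_compat; auto]. }
  exists (x, y, i + s * h y). split.
  - simpl. reflexivity.
  - eapply Rle_lt_trans; [apply dist3_le|].
    assert (E : c - (i + s * h y) = - (s * (h y - (c - i) / s))) by (field; auto).
    rewrite E, Rabs_Ropp, Rabs_mult.
    assert (Rabs s * Rabs (h y - (c - i) / s) < r / 3).
    { apply (Rmult_lt_compat_l (Rabs s)) in Hh; auto.
      replace (Rabs s * (r / 3 / Rabs s)) with (r/3) in Hh by (field; lra). exact Hh. }
    rewrite <- Rabs_Ropp in Hx. replace (- (x - a)) with (a - x) in Hx by ring.
    rewrite <- Rabs_Ropp in Hy. replace (- (y - b)) with (b - y) in Hy by ring.
    lra.
Qed.

Lemma arc_same i x1 x2 y z1 z2 :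
  P i (x1, y, z1) -> P i (x2, y, z2) -> (x1, y, z1) <> (x2, y, z2) ->
  exists f, is_arc_in (P i) (x1, y, z1) (x2, y, z2) f.
Proof.
  simpl. intros H1 H2 Hne.
  assert (Hx : x1 <> x2) by (intros ->; apply Hne; subst; reflexivity).
  exists (fun t => (x1 + t * (x2 - x1), y, i + sin ((x1 + t * (x2 - x1)) * PI) * h y)).
  split; [|split; [|split; [|split]]].
  - apply cont3; creg.
  - intros s t _ _ E. injection E. intros _ E1.
    apply (Rmult_eq_reg_r (x2 - x1)); [lra|]. lra.
  - intros t _. simpl. reflexivity.
  - rewrite Rmult_0_l, Rplus_0_r. subst. reflexivity.
  - rewrite Rmult_1_l. replace (x1 + (x2 - x1)) with x2 by ring. subst. reflexivity.
Qed.

Lemma arc_diff i x1 x2 y1 y2 z1 z2 :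
  P i (x1, y1, z1) -> P i (x2, y2, z2) -> y1 <> y2 ->
  exists f, is_arc_in (P i) (x1, y1, z1) (x2, y2, z2) f.
Proof.
  simpl. intros H1 H2 Hy.
  set (c := IZR (up (Rabs x1 + Rabs x2))).
  assert (Hc : c > Rabs x1 + Rabs x2) by (apply archimed).
  assert (Hc1 : c - x1 > 0) by (pose proof (Rle_abs x1); pose proof (Rabs_pos x2); lra).
  assert (Hc2 : x2 - c < 0) by (pose proof (Rle_abs x2); pose proof (Rabs_pos x1); lra).
  assert (Hsc : sin (c * PI) = 0) by apply sinPI_int.
  exists (fun t => (x1 + (c - x1) * clamp (3*t) + (x2 - c) * clamp (3*t-2),
                    y1 + (y2 - y1) * clamp (3*t-1),
                    i + sin ((x1 + (c - x1) * clamp (3*t)) * PI) * h y1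
                      + sin ((c + (x2 - c) * clamp (3*t-2)) * PI) * h y2)).
  split; [|split; [|split; [|split]]].
  - apply cont3; creg.
  - intros s t Hs Ht E. injection E. intros _ EY EX.
    destruct (regions s Hs) as [[R1 [A1 [B1 C1]]]|[[R1 [A1 [B1 C1]]]|[R1 [A1 [B1 C1]]]]];
    destruct (regions t Ht) as [[R2 [A2 [B2 C2]]]|[[R2 [A2 [B2 C2]]]|[R2 [A2 [B2 C2]]]]];
    rewrite ?A1, ?B1, ?C1, ?A2, ?B2, ?C2 in EX; rewrite ?A1, ?B1, ?C1, ?A2, ?B2, ?C2 in EY.
    + apply (Rmult_eq_reg_l (c - x1)); lra.
    + assert (t = 1/3) by (apply (Rmult_eq_reg_l (y2 - y1)); lra).
      assert (s = 1/3) by (apply (Rmult_eq_reg_l (c - x1)); lra). lra.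
    + exfalso. apply Hy. lra.
    + assert (s = 1/3) by (apply (Rmult_eq_reg_l (y2 - y1)); lra).
      assert (t = 1/3) by (apply (Rmult_eq_reg_l (c - x1)); lra). lra.
    + apply (Rmult_eq_reg_l (y2 - y1)); lra.
    + assert (s = 2/3) by (apply (Rmult_eq_reg_l (y2 - y1)); lra).
      assert (t = 2/3) by (apply (Rmult_eq_reg_l (x2 - c)); lra). lra.
    + exfalso. apply Hy. lra.
    + assert (t = 2/3) by (apply (Rmult_eq_reg_l (y2 - y1)); lra).
      assert (s = 2/3) by (apply (Rmult_eq_reg_l (x2 - c)); lra). lra.
    + apply (Rmult_eq_reg_l (x2 - c)); lra.
  - intros t Ht. simpl.
    destruct (regions t Ht) as [[R1 [A1 [B1 C1]]]|[[R1 [A1 [B1 C1]]]|[R1 [A1 [B1 C1]]]]];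
    rewrite A1, B1, C1.
    + assert (E1 : c + (x2 - c) * 0 = c) by ring.
      assert (E2 : x1 + (c - x1) * (3 * t) + (x2 - c) * 0 = x1 + (c - x1) * (3 * t)) by ring.
      assert (E3 : y1 + (y2 - y1) * 0 = y1) by ring.
      rewrite E1, E2, E3, Hsc. ring.
    + assert (E1 : c + (x2 - c) * 0 = c) by ring.
      assert (E2 : x1 + (c - x1) * 1 + (x2 - c) * 0 = c) by ring.
      assert (E4 : x1 + (c - x1) * 1 = c) by ring.
      rewrite E1, E2, E4, Hsc. ring.
    + assert (E2 : x1 + (c - x1) * 1 + (x2 - c) * (3 * t - 2) = c + (x2 - c) * (3 * t - 2)) by ring.
      assert (E4 : x1 + (c - x1) * 1 = c) by ring.
      assert (E3 : y1 + (y2 - y1) * 1 = y2) by ring.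
      rewrite E2, E3, E4, Hsc. ring.
  - rewrite Rmult_0_r, Rminus_0_l.
    rewrite clamp0, clamp0, clamp0 by lra.
    rewrite !Rmult_0_r, !Rplus_0_r, Hsc. subst. rewrite Rmult_0_l, Rplus_0_r. reflexivity.
  - rewrite Rmult_1_r. rewrite clamp1, clamp1, clamp1 by lra.
    rewrite !Rmult_1_r. replace (x1 + (c - x1)) with c by ring.
    replace (c + (x2 - c)) with x2 by ring. replace (y1 + (y2 - y1)) with y2 by ring.
    rewrite Hsc. subst. rewrite Rmult_0_l, Rplus_0_r. reflexivity.
Qed.

Theorem theorem1 :
  exists P : R -> (R3 -> Prop),
    (forall i j p, P i p -> P j p -> i = j) /\
    (forall p : R3, exists i, P i p) /\
    (forall i, arcwise_connected (P i) /\ dense3 (P i)).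
Proof.
  exists P. split; [|split].
  - intros i j [[x y] z] H1 H2. simpl in *. lra.
  - intros [[x y] z]. exists (z - sin (x * PI) * h y). simpl. ring.
  - intros i. split; [|apply P_dense].
    intros [[x1 y1] z1] [[x2 y2] z2] H1 H2 Hne.
    destruct (Req_dec y1 y2) as [<-|Hy].
    + apply arc_same; auto.
    + apply arc_diff; auto.
Qed.
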